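(* For any $n,s\in\mathbb{N}$ and every real number $x$, $$\sum_{k=0}^{n-1}\frac{x^{2k}}{(2k+1)^s}=\sum_{k=1}^n(-1)^{k-1}\binom{n}{k}\,{}_{s+1}F_s\left(\{\tfrac12\}^{s},1-k;\{\tfrac32\}^{s};x^2\right).$$
   Context: $\mathbb{N}$ is the set of positive integers; $\{a\}^s$ denotes $a$ repeated $s$ times. The generalized hypergeometric function is ${}_{s+1}F_s(a_1,\ldots,a_{s+1};b_1,\ldots,b_s;x)=\sum_{i\geq 0}\frac{(a_1)_i\cdots(a_{s+1})_i}{(b_1)_i\cdots(b_s)_i}\frac{x^i}{i!}$, with $(a)_0=1$, $(a)_i=a(a+1)\cdots(a+i-1)$ for $i>0$; here since $1-k$ is a nonpositive integer the series is a finite sum. *)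

(* Defs.v *)
From mathcomp Require Import all_boot all_order all_algebra.
From mathcomp Require Import all_classical all_reals.
Set Implicit Arguments. Unset Strict Implicit. Unset Printing Implicit Defensive.
Import Order.TTheory GRing.Theory Num.Theory.
Local Open Scope ring_scope.

Definition poch {R : ringType} (a : R) (i : nat) : R :=
  \prod_(j < i) (a + j%:R).

Definition hyper_term {R : fieldType} (as_ bs : seq R) (x : R) (i : nat) : R :=
  (\prod_(a <- as_) poch a i) / (\prod_(b <- bs) poch b i) * x ^+ i / (i`!)%:R.

(* Partial sum of the series over 0 <= i <= N. When some upper parameter equals
   1 - k (k >= 1), every term with i >= k vanishes, so for N >= k-1 this is the
   (finite) value of the series. *)
Definition hyper_sum {R : fieldType} (as_ bs : seq R) (x : R) (N : nat) : R :=
  \sum_(0 <= i < N.+1) hyper_term as_ bs x i.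

Definition F_lemma {R : realType} (s k : nat) (x : R) : R :=
  hyper_sum (rcons (nseq s (2^-1)) (1 - k%:R)) (nseq s (3 / 2)) x k.

(* Main.v *)
Require Import Defs.
From mathcomp Require Import all_boot all_order all_algebra.
From mathcomp Require Import all_classical all_reals.
From mathcomp Require Import ring lra.
Import Order.TTheory GRing.Theory Num.Theory.
Local Open Scope ring_scope.

Section Comb.
Variable R : comRingType.

Definition Asum n i : R := \sum_(0 <= j < n.+1) (-1) ^+ j * ('C(n, j))%:R * ('C(j, i))%:R.

Lemma Bsum0 n : \sum_(0 <= j < n.+1) (-1) ^+ j * ('C(n, j))%:R * ('C(j.+1, 0))%:R = Asum n 0 :> R.
Proof. by apply: eq_bigr => j _; rewrite !bin0. Qed.

Lemma BsumS n i : \sum_(0 <= j < n.+1) (-1) ^+ j * ('C(n, j))%:R * ('C(j.+1, i.+1))%:R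
  = Asum n i.+1 + Asum n i :> R.
Proof.
rewrite /Asum -big_split /=; apply: eq_bigr => j _.
by rewrite binS natrD mulrDr.
Qed.

Lemma Psum n i : \sum_(0 <= j < n.+1) (-1) ^+ j.+1 * ('C(n, j.+1))%:R * ('C(j.+1, i))%:R
  = Asum n i - ('C(0, i))%:R :> R.
Proof.
rewrite /Asum [in RHS]big_nat_recl // big_nat_recr //= bin_small // mulr0 mul0r addr0.
by rewrite expr0 bin0 !mul1r addrC addKr.
Qed.

Lemma AsumE n i : Asum n i = if n == i then (-1) ^+ n else 0.
Proof.
elim: n i => [|n IH] i.
  rewrite /Asum big_nat1 expr0 mul1r bin0 mul1r.
  by case: i.
have -> : Asum n.+1 i = ('C(0, i))%:R + (\sum_(0 <= j < n.+1) (-1) ^+ j.+1 * ('C(n, j.+1))%:R * ('C(j.+1, i))%:R)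
   - \sum_(0 <= j < n.+1) (-1) ^+ j * ('C(n, j))%:R * ('C(j.+1, i))%:R.
  rewrite /Asum big_nat_recl // expr0 bin0 mul1r mul1r -addrA -sumrB; f_equal.
  apply: eq_bigr => j _.
  by rewrite binS natrD exprS; ring.
rewrite Psum; case: i => [|i].
  by rewrite Bsum0 /=; ring.
rewrite BsumS bin0n /= !IH eqSS.
have [->|ni] := eqVneq n i.
  by rewrite (ltn_eqF (ltnSn i)) exprS; ring.
by case: (n == i.+1) => /=; ring.
Qed.

Definition Tsum n i : R := \sum_(0 <= j < n) (-1) ^+ j * ('C(n, j.+1))%:R * ('C(j, i))%:R.

Lemma TsumE n i : Tsum n i = if (i < n)%N then (-1) ^+ i else 0.
Proof.
elim: n => [|n IH]; first by rewrite /Tsum big_geq.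
have -> : Tsum n.+1 i = Tsum n i + Asum n i.
  rewrite /Tsum.
  have -> : \sum_(0<=j<n.+1) (-1)^+j * ('C(n.+1,j.+1))%:R * ('C(j,i))%:R
    = \sum_(0<=j<n.+1) (-1)^+j * ('C(n,j.+1))%:R * ('C(j,i))%:R + Asum n i :> R.
    rewrite /Asum -big_split; apply: eq_bigr => j _ /=; rewrite binS natrD; ring.
  by rewrite (big_nat_recr n 0) //= bin_small // mulr0 mul0r addr0.
rewrite IH AsumE ltnS.
by case: (ltngtP i n) => [h|h|->]; rewrite ?addr0 ?add0r.
Qed.
End Comb.
Section Hyp.
Variable R : realType.

Lemma poch_recr (a : R) i : poch a i.+1 = poch a i * (a + i%:R).
Proof. by rewrite /poch big_ord_recr. Qed.

Lemma poch_recl (a : R) i : poch a i.+1 = a * poch (a + 1) i.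
Proof.
rewrite /poch big_ord_recl /= addr0; congr (_ * _); apply: eq_bigr => j _.
by rewrite /bump /= add1n -addn1 natrD; ring.
Qed.

Lemma poch_gt0 (a : R) i : 0 < a -> 0 < poch a i.
Proof.
move=> a0; rewrite /poch; apply: prodr_gt0 => j _.
by apply: (lt_le_trans a0); rewrite lerDl ler0n.
Qed.

Lemma poch_ratio i : poch (2^-1 : R) i / poch (3/2) i = ((2 * i + 1)%:R)^-1.
Proof.
have h1 : poch (2^-1 : R) i * (2^-1 + i%:R) = 2^-1 * poch (3/2) i.
  rewrite -poch_recr poch_recl; have -> : (2^-1 + 1 : R) = 3/2 by field.
  by [].
have p0 : poch (3/2 : R) i != 0.
  by rewrite gt_eqF // poch_gt0 //; lra.
have q0 : (2^-1 + i%:R : R) != 0.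
  have : (0 : R) <= i%:R by rewrite ler0n.
  move=> h; rewrite gt_eqF //; lra.
have -> : poch (2^-1 : R) i = 2^-1 * poch (3/2) i / (2^-1 + i%:R).
  by rewrite -h1 mulfK.
have : (0 : R) <= i%:R by rewrite ler0n.
move=> h; rewrite natrD natrM; field.
rewrite p0 /= gt_eqF //; lra.
Qed.

Lemma poch_neg m i : poch (1 - (m.+1)%:R : R) i = (-1) ^+ i * (m ^_ i)%:R.
Proof.
elim: i => [|i IH]; first by rewrite /poch big_ord0 expr0 ffactn0 mulr1.
rewrite poch_recr IH ffactnSr natrM.
case: (leqP i m) => h.
  rewrite natrB // exprS; ring.
by rewrite ffact_small // mulr0 !mul0r mulr0.
Qed.

Lemma iter_mul (c : R) s : iter s (fun x => c * x) 1 = c ^+ s.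
Proof. by elim: s => [|s IH]; rewrite ?expr0 // exprS /= IH. Qed.

Lemma term_eq s m (y : R) i :
  hyper_term (rcons (nseq s (2^-1)) (1 - (m.+1)%:R)) (nseq s (3 / 2)) y i
  = (-1) ^+ i * ('C(m, i))%:R * (y ^+ i / ((2 * i + 1)%:R) ^+ s).
Proof.
rewrite /hyper_term big_rcons /= !big_nseq !iter_mul poch_neg -bin_ffact natrM.
have f0 : (i`!)%:R != 0 :> R by rewrite pnatr_eq0 -lt0n fact_gt0.
have p0 : poch (3/2 : R) i != 0.
  by rewrite gt_eqF // poch_gt0 //; lra.
have hP : poch (2^-1 : R) i = poch (3/2) i * ((2 * i + 1)%:R)^-1.
  by rewrite -poch_ratio mulrC divfK.
have n0 : ((2 * i + 1)%:R : R) != 0 by rewrite pnatr_eq0 addn1.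
rewrite hP exprMn exprVn.
move: (expf_neq0 s p0) (expf_neq0 s n0).
move: (poch (3/2 : R) i ^+ s) (((2 * i + 1)%:R : R) ^+ s) => A B hA hB.
field.
by rewrite f0 hA hB.
Qed.
End Hyp.

Lemma sum_trunc (R : realType) (F : nat -> R) p a :
  (forall i, (p <= i)%N -> F i = 0) -> (p <= a)%N ->
  \sum_(0 <= i < a) F i = \sum_(0 <= i < p) F i.
Proof.
move=> hF hpa; rewrite (@big_cat_nat _ _ _ p 0 a) //=.
rewrite [X in _ + X]big1_seq ?addr0 // => i /andP[_].
by rewrite mem_index_iota => /andP[hi _]; apply: hF.
Qed.

Lemma F_sum (R : realType) s m n (y : R) : (m < n)%N ->
  F_lemma s m.+1 y = \sum_(0 <= i < n) (-1) ^+ i * ('C(m, i))%:R * (y ^+ i / ((2 * i + 1)%:R) ^+ s).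
Proof.
move=> mn; rewrite /F_lemma /hyper_sum.
under eq_bigr do rewrite term_eq.
have hz : forall i, (m.+1 <= i)%N ->
   (-1) ^+ i * ('C(m, i))%:R * (y ^+ i / ((2 * i + 1)%:R) ^+ s) = 0 :> R.
  by move=> i hi; rewrite bin_small // mulr0 mul0r.
by rewrite (@sum_trunc R _ m.+1 _ hz) // [RHS](@sum_trunc R _ m.+1 _ hz).
Qed.

Theorem lemma3p1 (R : realType) (n s : nat) (x : R) :
  (0 < n)%N -> (0 < s)%N ->
  \sum_(0 <= k < n) x ^+ (2 * k) / ((2 * k + 1)%:R) ^+ s =
  \sum_(1 <= k < n.+1) (-1) ^+ (k - 1) * ('C(n, k))%:R * F_lemma s k (x ^+ 2).
Proof.
move=> _ _.
rewrite big_add1 /=.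
rewrite [RHS](@eq_big_nat _ _ _ 0 n _ (fun j => \sum_(0 <= i < n) (-1) ^+ j * ('C(n, j.+1))%:R *
   ((-1) ^+ i * ('C(j, i))%:R * ((x ^+ 2) ^+ i / ((2 * i + 1)%:R) ^+ s)))); last first.
  move=> j /andP[_ hj]; rewrite (@F_sum R s j n _ hj) subn1 /= mulr_sumr.
  by [].
rewrite exchange_big /=.
apply: eq_big_nat => i /andP[_ hi].
have -> : \sum_(0 <= j < n) (-1) ^+ j * ('C(n, j.+1))%:R *
   ((-1) ^+ i * ('C(j, i))%:R * ((x ^+ 2) ^+ i / ((2 * i + 1)%:R) ^+ s))
   = (-1) ^+ i * ((x ^+ 2) ^+ i / ((2 * i + 1)%:R) ^+ s) * Tsum R n i.
  by rewrite /Tsum mulr_sumr; apply: eq_bigr => j _; ring.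
rewrite TsumE hi -exprM [RHS]mulrC [RHS]mulrA -exprMn mulN1r opprK expr1n mul1r.
by [].
Qed.
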